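(* Let $B$, $C$ be unital $\mathrm{C}^*$-algebras, let $\{\phi_i\}_{i=1}^m$, $\{\psi_j\}_{j=1}^n$ be families of surjective $*$-homomorphisms $B\to C$, and let $[c_{ij}]\in M_{m,n}(C)$ satisfy $\phi_i(b)c_{ij}=c_{ij}\psi_j(b)$ for all $b\in B$, $1\le i\le m$, $1\le j\le n$. (i) If $F_\pi\in M_n(C)$ is the permutation matrix of a permutation $\pi\in S_n$ (so that $[c_{ij}]F_\pi$ has $(i,j)$ entry $c_{i\pi(j)}$), then $[c_{ij}]F_\pi$ intertwines $\{\phi_i\}_{i=1}^m$ and $\{\psi_{\pi(j)}\}_{j=1}^n$, i.e. $\phi_i(b)c_{i\pi(j)}=c_{i\pi(j)}\psi_{\pi(j)}(b)$ for all $b,i,j$. (ii) If $c_{kk}$ is invertible, $h\ne k$, and $E_{hk}\in M_m(C)$ is the matrix of the elementary row operation that adds the $k$-th row multiplied on the left by $-c_{hk}c_{kk}^{-1}$ to the $h$-th row, then $E_{hk}[c_{ij}]=[c'_{ij}]$ again satisfies $\phi_i(b)c'_{ij}=c'_{ij}\psi_j(b)$ for all $b\in B$, $1\le i\le m$, $1\le j\le n$. *)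

(* Defs.v *)
From HB Require Import structures.
From mathcomp Require Import all_boot all_order all_algebra all_fingroup.
From mathcomp Require Import complex reals.
Set Implicit Arguments. Unset Strict Implicit. Unset Printing Implicit Defensive.
Import Order.TTheory GRing.Theory Num.Theory.
Local Open Scope ring_scope.

Definition unital_cstar_algebra (R : realType) (A : algType R[i])
    (star : A -> A) (nrm : A -> R) : Prop :=
  ((forall x, star (star x) = x) /\
   (forall x y, star (x + y) = star x + star y) /\
   (forall (a : R[i]) x, star (a *: x) = conjc a *: star x) /\
   (forall x y, star (x * y) = star y * star x)) /\
  ((forall x, 0 <= nrm x) /\ (forall x, nrm x = 0 -> x = 0) /\
   (forall x y, nrm (x + y) <= nrm x + nrm y) /\
   (forall (a : R[i]) x, nrm (a *: x) = ComplexField.Normc.normc a * nrm x) /\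
   (forall x y, nrm (x * y) <= nrm x * nrm y)) /\
  (forall x, nrm (star x * x) = nrm x ^+ 2) /\
  (forall u : nat -> A,
     (forall e : R, 0 < e -> exists N, forall p q, (N <= p)%N -> (N <= q)%N ->
        nrm (u p - u q) < e) ->
     exists l : A, forall e : R, 0 < e -> exists N, forall p, (N <= p)%N ->
        nrm (u p - l) < e).

Definition star_hom (R : realType) (A1 A2 : algType R[i])
    (star1 : A1 -> A1) (star2 : A2 -> A2) (f : A1 -> A2) : Prop :=
  [/\ (forall x y, f (x + y) = f x + f y),
      (forall (a : R[i]) x, f (a *: x) = a *: f x),
      (forall x y, f (x * y) = f x * f y) &
      (forall x, f (star1 x) = star2 (f x))].

Definition intertwines (R : realType) (B C : algType R[i]) (m n : nat)
    (phi : 'I_m -> B -> C) (psi : 'I_n -> B -> C) (c : 'M[C]_(m, n)) : Prop :=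
  forall (b : B) (i : 'I_m) (j : 'I_n), phi i b * c i j = c i j * psi j b.

(* Main.v *)
Require Import Defs.
From HB Require Import structures.
From mathcomp Require Import all_boot all_order all_algebra all_fingroup.
From mathcomp Require Import complex reals.
Import Order.TTheory GRing.Theory Num.Theory.
Local Open Scope ring_scope.

Theorem lemma3p2 (R : realType) (B C : algType R[i])
    (starB : B -> B) (nrmB : B -> R) (starC : C -> C) (nrmC : C -> R)
    (HB : unital_cstar_algebra starB nrmB) (HC : unital_cstar_algebra starC nrmC)
    (m n : nat) (phi : 'I_m -> B -> C) (psi : 'I_n -> B -> C)
    (Hphi : forall i, star_hom starB starC (phi i) /\ (forall y, exists x, phi i x = y))
    (Hpsi : forall j, star_hom starB starC (psi j) /\ (forall y, exists x, psi j x = y))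
    (c : 'M[C]_(m, n)) (Hc : intertwines phi psi c) :
  (* (i): F_pi = perm_mx pi^-1, so that (c *m F_pi) i j = c i (pi j) *)
  (forall pi : 'S_n,
     intertwines phi (fun j => psi (pi j)) (c *m perm_mx (pi^-1)%g))
  /\
  (* (ii): c_kk invertible with inverse d, h <> k, E_hk = 1 - (c_hk d) e_hk *)
  (forall (k : 'I_m) (kn : 'I_n) (d : C),
     nat_of_ord k = nat_of_ord kn ->
     c k kn * d = 1 -> d * c k kn = 1 ->
     forall h : 'I_m, h != k ->
     intertwines phi psi
       ((1%:M - (c h kn * d) *: delta_mx h k) *m c)).
Proof.
split.
  move=> pi b i j; rewrite -col_permE !mxE; exact: Hc.
move=> k kn d _ Hcd Hdc h hk b i j.
have E : forall i' j', ((1%:M - (c h kn * d) *: delta_mx h k) *m c) i' j'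
   = c i' j' - (i' == h)%:R * (c h kn * d * c k j').
  move=> i' j'; rewrite mulmxBl mul1mx -scalemxAl !mxE.
  rewrite (bigD1 k) //= big1 ?addr0; last first.
    by move=> l /negbTE lk; rewrite mxE lk andbF mul0r.
  rewrite mxE eqxx andbT; case: (i' == h); rewrite ?mul1r ?mul0r //.
  by rewrite mulr0.
rewrite !E.
have Hd : d * phi k b = psi kn b * d.
  rewrite -[LHS]mulr1 -Hcd mulrA -[d * phi k b * c k kn]mulrA Hc.
  by rewrite !mulrA Hdc mul1r.
case: (i =P h) => [->|_]; last by rewrite !mul0r !subr0 Hc.
rewrite !mul1r mulrBr mulrBl Hc; congr (_ - _).
rewrite !mulrA Hc -[c h kn * psi kn b * d]mulrA -Hd.
by rewrite -!mulrA Hc.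
Qed.
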